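(* Let $f:\mathcal X^n\to\mathcal T$ with $\mathcal T$ finite, $\varepsilon>0$, and let $M$ be $L_{0,1}$-unbiased and $\varepsilon$-differentially private, where $L_{0,1}(s,t)=\mathbf 1\{s\ne t\}$. Then for every $x\in\mathcal X^n$ and $t\in\mathcal T$, $$\mathbb P(M(x)=t)\ge e^{-2\,\mathrm{len}_f(x;t)\varepsilon}\,\mathbb P(M(x)=f(x)).$$
   Context: $d_H$ is the Hamming distance on $\mathcal X^n$; neighboring means $d_H\le1$. $M$ is $\varepsilon$-differentially private if $\mathbb P(M(x)\in S)\le e^\varepsilon\mathbb P(M(x')\in S)$ for all neighboring $x,x'$ and all $S$. $M$ is $L$-unbiased if $\mathbb E[L(M(x),f(x))]\le\mathbb E[L(M(x),t)]$ for all $x,t$; for $L_{0,1}$ this means $\mathbb P(M(x)=f(x))\ge\mathbb P(M(x)=t)$. The inverse sensitivity is $\mathrm{len}_f(x;t)=\inf\{d_H(x,x'):f(x')=t\}$ with $\inf\emptyset=+\infty$ and $e^{-\infty}=0$. *)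

(* Defs.v *)
From HB Require Import structures.
From mathcomp Require Import all_boot all_order all_algebra.
From mathcomp Require Import all_classical all_reals all_analysis.
Set Implicit Arguments. Unset Strict Implicit. Unset Printing Implicit Defensive.
Import Order.TTheory GRing.Theory Num.Theory.
Local Open Scope ring_scope.

(* Datasets: x : 'I_n -> X  (elements of X^n), X an arbitrary type.
   A mechanism M with values in the finite set T is represented by its
   output law:  pM x t = P(M(x) = t). *)

Definition dH (X : Type) (n : nat) (x y : 'I_n -> X) : nat :=
  #|[set i : 'I_n | `[< x i <> y i >]]|.

Definition neighboring (X : Type) (n : nat) (x y : 'I_n -> X) : Prop :=
  (dH x y <= 1)%N.

Definition is_mechanism (R : realType) (X : Type) (n : nat) (T : finType)
  (pM : ('I_n -> X) -> T -> R) : Prop :=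
  forall x, (forall t, 0 <= pM x t) /\ \sum_(t : T) pM x t = 1.

Definition probS (R : realType) (X : Type) (n : nat) (T : finType)
  (pM : ('I_n -> X) -> T -> R) (x : 'I_n -> X) (S : {set T}) : R :=
  \sum_(t in S) pM x t.

Definition eps_DP (R : realType) (X : Type) (n : nat) (T : finType)
  (pM : ('I_n -> X) -> T -> R) (eps : R) : Prop :=
  forall x x' : 'I_n -> X, neighboring x x' ->
  forall S : {set T}, probS pM x S <= expR eps * probS pM x' S.

Definition unbiased (R : realType) (X : Type) (n : nat) (T : finType)
  (L : T -> T -> R) (f : ('I_n -> X) -> T) (pM : ('I_n -> X) -> T -> R) : Prop :=
  forall x t, \sum_(s : T) pM x s * L s (f x) <= \sum_(s : T) pM x s * L s t.

Definition L01 (R : realType) (T : finType) (s t : T) : R := (s != t)%:R.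

(* inverse sensitivity, valued in extended reals: inf of empty set = +oo *)
Definition len_f (R : realType) (X : Type) (n : nat) (T : Type)
  (f : ('I_n -> X) -> T) (x : 'I_n -> X) (t : T) : \bar R :=
  ereal_inf [set ((dH x x')%:R)%:E | x' in [set x' | f x' = t]].

(* Main.v *)
Require Import Defs.
From HB Require Import structures.
From mathcomp Require Import all_boot all_order all_algebra.
From mathcomp Require Import all_classical all_reals all_analysis.
Import Order.TTheory GRing.Theory Num.Theory.
Local Open Scope ring_scope.

Lemma dH_sym (X : Type) (n : nat) (x y : 'I_n -> X) : dH x y = dH y x.
Proof.
rewrite /dH; apply: eq_card => i; rewrite !inE.
apply/asboolP/asboolP => H E; apply: H; by rewrite E.
Qed.

Lemma group_priv (R : realType) (X : Type) (n : nat) (T : finType)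
  (pM : ('I_n -> X) -> T -> R) (eps : R) :
  eps_DP pM eps ->
  forall k x x', dH x x' = k -> forall t, pM x t <= expR (k%:R * eps) * pM x' t.
Proof.
move=> DP; elim=> [|k IH] x x' Hd t.
- have -> : x = x'.
    apply: funext => i; apply: contrapT => Hi.
    have : i \in [set i : 'I_n | `[< x i <> x' i >]] by rewrite inE; apply/asboolP.
    move=> Hin; have : (0 < dH x x')%N by apply/card_gt0P; exists i.
    by rewrite Hd.
  by rewrite mul0r expR0 mul1r.
- have : (0 < #|[set i : 'I_n | `[< x i <> x' i >]]|)%N by rewrite -/(dH x x') Hd.
  case/card_gt0P => i; rewrite inE => /asboolP Hi.
  pose y := fun j => if j == i then x' i else x j.
  have Hxy : dH x y = 1%N.
    rewrite /dH -(cards1 i); apply: eq_card => j; rewrite !inE /y.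
    case: eqP => [->|_]; first by apply/asboolP.
    by apply/asboolP.
  have Hyx : dH y x' = k.
    have : #|[set i : 'I_n | `[< x i <> x' i >]] :\ i| = k.
      move: Hd; rewrite /dH (cardsD1 i) inE.
      have -> : `[< x i <> x' i >] = true by apply/asboolP.
      by rewrite add1n => -[].
    move=> <-; rewrite /dH; apply: eq_card => j; rewrite !inE /y.
    case: eqP => [->|_] /=.
      by apply/asboolP; apply.
    by [].
  have H1 : pM x t <= expR eps * pM y t.
    have := DP x y (eq_leq Hxy) [set t].
    by rewrite /probS !big_set1.
  apply: (le_trans H1).
  rewrite -addn1 natrD mulrDl mul1r expRD mulrC -mulrA.
  rewrite (mulrC (expR eps)) mulrA.
  apply: ler_wpM2r; first by apply: ltW; apply: expR_gt0.
  exact: IH.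
Qed.
Lemma sumL01 (R : realType) (T : finType) (p : T -> R) a :
  \sum_(s : T) p s * @L01 R T s a = \sum_s p s - p a.
Proof.
rewrite (bigD1 a) //= [X in _ = X - _](bigD1 a) //= /L01 eqxx mulr0 add0r.
rewrite addrC addrK; apply: eq_bigr => s /negbTE ->; by rewrite mulr1.
Qed.

Lemma unb (R : realType) (X : Type) (n : nat) (T : finType)
  (f : ('I_n -> X) -> T) (pM : ('I_n -> X) -> T -> R) :
  unbiased (@L01 R T) f pM -> forall x t, pM x t <= pM x (f x).
Proof.
move=> U x t; have := U x t; rewrite !sumL01; by rewrite lerD2l lerN2.
Qed.
Local Open Scope classical_set_scope.
Local Open Scope ereal_scope.
Theorem lemmaA1 (R : realType) (X : Type) (n : nat) (T : finType)
  (f : ('I_n -> X) -> T) (eps : R) (pM : ('I_n -> X) -> T -> R) :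
  (0 < eps)%R ->
  is_mechanism pM ->
  unbiased (@L01 R T) f pM ->
  eps_DP pM eps ->
  forall (x : 'I_n -> X) (t : T),
    (pM x t)%:E >= expeR (- (2%:E * len_f R f x t * eps%:E)) * (pM x (f x))%:E.
Proof.
move=> e0 mech U DP x t.
have p0 : forall y s, (0 <= pM y s)%R by move=> y s; case: (mech y) => h _; exact: h.
have infty : len_f R f x t = +oo ->
    expeR (- (2%:E * len_f R f x t * eps%:E)) * (pM x (f x))%:E <= (pM x t)%:E.
  move=> ->; rewrite mulry /= gtr0_sg // mul1e mulyr gtr0_sg // mul1e /=.
  by rewrite mul0e lee_fin.
case: (pselect (exists x', f x' = t)) => [[x0 fx0]|nox]; last first.
  apply: infty; rewrite /len_f.
  have -> : [set x' | f x' = t] = set0.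
    by apply/seteqP; split => y //= fy; apply: nox; exists y.
  by rewrite image_set0 ereal_inf0.
pose P := fun k => `[< exists x', f x' = t /\ dH x x' = k >].
have exP : exists k, P k by exists (dH x x0); apply/asboolP; exists x0.
case: (ex_minnP exP) => m /asboolP [x' [fx' dx']] minm.
have mle : (m%:R)%:E <= len_f R f x t.
  apply: le_ereal_inf_tmp => _ [y /= fy <-].
  rewrite lee_fin ler_nat; apply: minm; apply/asboolP; by exists y.
case E: (len_f R f x t) => [r| |]; last 2 first.
- by rewrite -E; apply: infty.
- by rewrite E in mle.
rewrite E lee_fin in mle.
rewrite -!EFinM /= lee_fin.
have A : (pM x (f x) <= expR (m%:R * eps) * pM x' (f x))%R by apply: group_priv.
have B : (pM x' (f x) <= pM x' t)%R by rewrite -fx'; exact: (@unb _ _ _ _ _ _ U x' (f x)).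
have C : (pM x' t <= expR (m%:R * eps) * pM x t)%R.
  by apply: group_priv => //; rewrite dH_sym.
have D : (pM x (f x) <= expR (m%:R * eps) * expR (m%:R * eps) * pM x t)%R.
  apply: (le_trans A); rewrite -mulrA; apply: ler_wpM2l; first exact: ltW (expR_gt0 _).
  exact: le_trans B C.
have K : (expR (- (2 * r * eps)) <= expR (- (2 * m%:R * eps)))%R.
  rewrite ler_expR lerN2; apply: ler_wpM2r; first exact: ltW.
  by apply: ler_wpM2l.
apply: (le_trans (ler_wpM2r (p0 _ _) K)).
rewrite -expRD in D.
have Em : (m%:R * eps + m%:R * eps = 2 * m%:R * eps)%R by rewrite -mulrA mulr2n mulrDl mul1r.
rewrite Em in D.
rewrite expRN -ler_pdivlMl ?invr_gt0 ?expR_gt0 // invrK.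
exact: D.
Qed.
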